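(* Let $n$ be a positive integer and define $$ F_n(x,b,q)=\sum_{k=0}^n \frac{(q^{-n};q)_k\,(b;q)_k\,(x;q)_k}{(q;q)_k\,(bq^{1-n};q^2)_k}\, q^k . $$ Then, as rational functions in the indeterminates $x,b,q$, $F_n(x,b,q)=(-1)^n F_n(-x,b,q)$.
   Context: The $q$-shifted factorial is $(y;q)_0=1$ and $(y;q)_m=(1-y)(1-yq)\cdots(1-yq^{m-1})$ for $m\geqslant1$. *)

(* Defs.v *)
From HB Require Import structures.
From mathcomp Require Import all_boot all_order all_algebra.
Set Implicit Arguments. Unset Strict Implicit. Unset Printing Implicit Defensive.
Import Order.TTheory GRing.Theory Num.Theory.
Local Open Scope ring_scope.

Definition qpoch (R : ringType) (y q : R) (m : nat) : R :=
  \prod_(i < m) (1 - y * q ^+ i).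

Definition Fn (K : fieldType) (n : nat) (x b q : K) : K :=
  \sum_(k < n.+1)
    (qpoch (q ^ (- (n%:Z))) q k * qpoch b q k * qpoch x q k)
      / (qpoch q q k * qpoch (b * q ^ (1 - n%:Z)) (q ^+ 2) k) * q ^+ k.

(* Main.v *)
Require Import Defs.
From HB Require Import structures.
From mathcomp Require Import all_boot all_order all_algebra.
From mathcomp Require Import ring.
Import Order.TTheory GRing.Theory Num.Theory.
Local Open Scope ring_scope.
Set Implicit Arguments. Unset Strict Implicit. Unset Printing Implicit Defensive.

Lemma qp0 (K : fieldType) (y q : K) : qpoch y q 0 = 1.
Proof. by rewrite /qpoch big_ord0. Qed.

Lemma qpS (K : fieldType) (y q : K) m : qpoch y q m.+1 = qpoch y q m * (1 - y * q ^+ m).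
Proof. by rewrite /qpoch big_ord_recr. Qed.

Lemma qpSl (K : fieldType) (y q : K) m : qpoch y q m.+1 = (1 - y) * qpoch (y * q) q m.
Proof.
rewrite /qpoch big_ord_recl expr0 mulr1; congr (_ * _).
by apply: eq_bigr => i _; rewrite /= exprS mulrA.
Qed.

Definition Fg {K : fieldType} (q : K) n x b c :=
  \sum_(k < n.+1) qpoch (q ^- n) q k * qpoch b q k * qpoch x q k
     / (qpoch q q k * qpoch c (q ^+ 2) k) * q ^+ k.

Lemma Fn_Fg (K : fieldType) (q : K) n x b : q != 0 ->
  Fn n x b q = Fg q n x b (b * q / q ^+ n).
Proof.
move=> q0; rewrite /Fn /Fg -exprnN.
have -> : q ^ (1 - n%:Z) = q / q ^+ n.
  by rewrite expfzDr // expr1z exprnN.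
by rewrite mulrA.
Qed.

Lemma qp_vanish (K : fieldType) (q : K) n : q != 0 -> qpoch (q ^- n) q n.+1 = 0.
Proof.
move=> q0; rewrite qpS mulVf ?subrr ?mulr0 //; exact: expf_neq0.
Qed.

Lemma qp_nz_last (K : fieldType) (y q : K) m : qpoch y q m.+1 != 0 -> 1 - y * q ^+ m != 0.
Proof. by rewrite qpS mulf_eq0 negb_or => /andP[]. Qed.

Lemma qp_nz_le (K : fieldType) (y q : K) m k : (k <= m)%N -> qpoch y q m != 0 -> qpoch y q k != 0.
Proof.
move/subnKC <-; elim: (m - k)%N => [|d IH]; first by rewrite addn0.
by rewrite addnS qpS mulf_eq0 negb_or => /andP[/IH].
Qed.

Definition tA {K : fieldType} (q c : K) n k :=
  qpoch (q ^- n) q k * qpoch (c * q ^+ n / q) q k * qpoch (-1) q k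
     / (qpoch q q k * qpoch c (q ^+ 2) k) * q ^+ k.

Definition GA {K : fieldType} (q c : K) n k :=
  if k is j.+1 then (-1) ^+ n.+1 * (qpoch (q ^- n) q j * qpoch (c * q ^+ n) q j
     * qpoch (-1) q k / (qpoch q q j * qpoch c (q ^+ 2) j)) else 0.

Lemma wz_step (K : fieldType) (q c : K) n k : q != 0 -> (k <= n.+1)%N ->
  qpoch q q n.+1 != 0 -> qpoch c (q ^+ 2) n.+1 != 0 ->
  (-1) ^+ n.+1 * tA q c n.+1 k - (-1) ^+ n * tA q c n k = GA q c n k.+1 - GA q c n k.
Proof.
move=> q0 kn hq hc; rewrite /tA /GA.
case: k kn => [|j] jn.
  rewrite !qp0 qpS qp0 !expr0 !mulr1 exprS; ring.
have hqj : qpoch q q j.+1 != 0 by apply: qp_nz_le hq.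
have hcj : qpoch c (q ^+ 2) j.+1 != 0 by apply: qp_nz_le hc.
have hq1 := qp_nz_last hqj. have hc1 := qp_nz_last hcj.
have hqj' : qpoch q q j != 0 by apply: qp_nz_le hqj.
have hcj' : qpoch c (q ^+ 2) j != 0 by apply: qp_nz_le hcj.
have e1 : q ^- n.+1 * q = q ^- n by rewrite exprSr invfM -mulrA mulVf ?mulr1.
have e2 : c * q ^+ n.+1 / q = c * q ^+ n by rewrite exprSr mulrA mulfK.
have e3 : c * q ^+ n / q * q = c * q ^+ n by rewrite divfK.
rewrite e2 (qpSl (q ^- n.+1)) e1 (qpS (c * q ^+ n)) (qpSl (c * q ^+ n / q)) e3.
rewrite ?(qpS q q j) ?(qpS c _ j) ?(qpS (q ^- n) q j) ?(qpS (c * q ^+ n) q j).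
rewrite (qpS (-1) q j.+1).
move: hq1 hc1.
set A := qpoch (q ^- n) q j. set B := qpoch (c * q ^+ n) q j.
set C := qpoch (-1) q j.+1. set D := qpoch q q j. set E := qpoch c (q ^+ 2) j.
rewrite -!exprM mulnC exprM.
have wn : q ^+ n != 0 by apply: expf_neq0.
rewrite !exprSr.
set w := q ^+ n. set z := q ^+ j.
move=> h1 h2.
rewrite !mul1r.
rewrite expr0 mul1r in h2.
have hD : D != 0 by []. have hE : E != 0 by [].
field; rewrite ?wn ?q0 ?h1 ?h2 ?hD ?hE ?andbT //.
Qed.

Lemma anchor (K : fieldType) (q c : K) n : q != 0 ->
  (forall k, (k <= n)%N -> qpoch q q k != 0) ->
  (forall k, (k <= n)%N -> qpoch c (q ^+ 2) k != 0) ->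
  Fg q n (-1) (c * q ^+ n / q) c = (-1) ^+ n.
Proof.
move=> q0; elim: n => [|n IH] hq hc.
  by rewrite /Fg big_ord1 !qp0 !expr0 !mulr1 divr1.
have IH' := IH (fun k hk => hq k (leqW hk)) (fun k hk => hc k (leqW hk)).
have key : \sum_(k < n.+2) ((-1) ^+ n.+1 * tA q c n.+1 k - (-1) ^+ n * tA q c n k) = 0.
  rewrite -(big_mkord xpredT (fun k => (-1) ^+ n.+1 * tA q c n.+1 k - (-1) ^+ n * tA q c n k)).
  rewrite (telescope_sumr_eq (GA q c n)) //.
    by rewrite /GA qp_vanish // !mul0r mulr0 subr0.
  move=> k /andP[_ hk]; apply: wz_step => //; [exact: hq | exact: hc].
have e2 : \sum_(i < n.+2) tA q c n i = Fg q n (-1) (c * q ^+ n / q) c.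
  rewrite big_ord_recr /= {2}/tA qp_vanish // !mul0r addr0; by apply: eq_bigr.
rewrite sumrB -!mulr_sumr e2 IH' in key.
have -> : Fg q n.+1 (-1) (c * q ^+ n.+1 / q) c = \sum_(i < n.+2) tA q c n.+1 i by [].
move/eqP: key; rewrite subr_eq0 => /eqP key.
have s : ((-1) ^+ n.+1 : K) * (-1) ^+ n.+1 = 1 by rewrite -exprMn mulrNN mulr1 expr1n.
have -> : \sum_(i < n.+2) tA q c n.+1 i = (-1) ^+ n.+1 * ((-1) ^+ n.+1 * \sum_(i < n.+2) tA q c n.+1 i) by rewrite mulrA s mul1r.
by rewrite key -exprMn mulrNN mulr1 expr1n mulr1.
Qed.

Definition Qp {K : fieldType} (q s : K) k : {poly K} := \prod_(i < k) (1 - (s * q ^+ i) *: 'X).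
Definition Cg {K : fieldType} (q : K) n b c k :=
  qpoch (q ^- n) q k * qpoch b q k / (qpoch q q k * qpoch c (q ^+ 2) k) * q ^+ k.
Definition Pp {K : fieldType} (q : K) n b c s : {poly K} :=
  \sum_(k < n.+1) Cg q n b c k *: Qp q s k.

Lemma Qp_horner (K : fieldType) (q s x : K) k : (Qp q s k).[x] = qpoch (s * x) q k.
Proof.
rewrite /Qp horner_prod /qpoch; apply: eq_bigr => i _.
by rewrite !hornerE mulrAC.
Qed.

Lemma Pp_horner (K : fieldType) (q : K) n b c s x : (Pp q n b c s).[x] = Fg q n (s * x) b c.
Proof.
rewrite /Pp /Fg horner_sum; apply: eq_bigr => k _.
rewrite hornerZ Qp_horner /Cg; ring.
Qed.

Lemma Qp0 (K : fieldType) (q s : K) : Qp q s 0 = 1.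
Proof. by rewrite /Qp big_ord0. Qed.

Lemma QpS (K : fieldType) (q s : K) k : Qp q s k.+1 = Qp q s k * (1 - (s * q ^+ k) *: 'X).
Proof. by rewrite /Qp big_ord_recr. Qed.

Lemma coefQp (K : fieldType) (q s : K) k i :
  (Qp q s k)`_i = s ^+ i * (Qp q 1 k)`_i /\ ((k < i)%N -> (Qp q s k)`_i = 0).
Proof.
elim: k i => [|k IH] i.
  rewrite !Qp0 !coef1; case: i => [|i] /=.
    by rewrite expr0 mul1r; split.
  by rewrite mulr0; split.
rewrite !QpS !mulrBr !mulr1 !coefB -!scalerAr !coefZ !coefMX.
case: i => [|i] /=.
  by rewrite (proj1 (IH 0%N)) !expr0 !mul1r !mulr0; split.
split; first by rewrite (proj1 (IH i.+1)) (proj1 (IH i)) !exprS mul1r; ring.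
move=> hk; rewrite (proj2 (IH i.+1)) ?(proj2 (IH i)) ?mulr0 ?subr0 //.
exact: ltnW.
Qed.

Lemma coefPp (K : fieldType) (q : K) n b c s i :
  (Pp q n b c s)`_i = s ^+ i * (Pp q n b c 1)`_i.
Proof.
rewrite /Pp !coef_sum mulr_sumr; apply: eq_bigr => k _.
by rewrite !coefZ (proj1 (coefQp q s k i)) mulrCA.
Qed.

Lemma coefPp_big (K : fieldType) (q : K) n b c s i : (n < i)%N -> (Pp q n b c s)`_i = 0.
Proof.
move=> hi; rewrite /Pp coef_sum big1 // => k _.
rewrite coefZ (proj2 (coefQp q s k i)) ?mulr0 //.
exact: leq_ltn_trans (ltnSE (ltn_ord k)) hi.
Qed.

Lemma QpD (K : fieldType) (q s : K) k :
  Qp q s k.+1 - Qp q (s * q) k.+1 = (- (s * (1 - q ^+ k.+1))) *: ('X * Qp q (s * q) k).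
Proof.
have -> : Qp q s k.+1 = (1 - s *: 'X) * Qp q (s * q) k.
  rewrite /Qp big_ord_recl expr0 mulr1; congr (_ * _).
  by apply: eq_bigr => i _; rewrite lift0 exprS mulrA.
rewrite QpS.
rewrite -!mul_polyC !polyCN !polyCM polyCB polyC1 !mulrBl !mulrBr exprS !polyCM.
ring.
Qed.

Lemma CgS (K : fieldType) (q : K) n b c k : q != 0 ->
  qpoch q q k.+1 != 0 -> qpoch c (q ^+ 2) k.+1 != 0 ->
  Cg q n.+1 b c k.+1 * (1 - q ^+ k.+1) =
  (1 - q ^- n.+1) * (1 - b) * q / (1 - c) * Cg q n (b * q) (c * q ^+ 2) k.
Proof.
move=> q0 hq hc.
have hq1 := qp_nz_last hq.
have hq' : qpoch q q k != 0 by apply: qp_nz_le hq.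
move: hc; rewrite qpSl mulf_eq0 negb_or => /andP[hc1 hc'].
have e1 : q ^- n.+1 * q = q ^- n by rewrite exprSr invfM -mulrA mulVf ?mulr1.
rewrite /Cg (qpSl (q ^- n.+1)) e1 (qpSl b) (qpS q q k) qpSl.
move: hq1; rewrite -exprS => hq1.
have wn : q ^+ n != 0 by apply: expf_neq0.
set P1 := qpoch (q ^- n) q k. set P2 := qpoch (b * q) q k.
set P3 := qpoch q q k. set P4 := qpoch (c * q ^+ 2) (q ^+ 2) k.
move: hq1; rewrite !exprSr; set w := q ^+ n; set z := q ^+ k => hq1.
have h3 : P3 != 0 by []. have h4 : P4 != 0 by [].
field; by rewrite ?h3 ?h4 ?hq1 ?hc1 ?wn ?q0.
Qed.

Lemma PpD (K : fieldType) (q : K) n b c s : q != 0 ->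
  (forall k, (k <= n.+1)%N -> qpoch q q k != 0) ->
  (forall k, (k <= n.+1)%N -> qpoch c (q ^+ 2) k != 0) ->
  Pp q n.+1 b c s - Pp q n.+1 b c (s * q) =
  (- (s * ((1 - q ^- n.+1) * (1 - b) * q / (1 - c)))) *:
     ('X * Pp q n (b * q) (c * q ^+ 2) (s * q)).
Proof.
move=> q0 hq hc.
rewrite /Pp -sumrB big_ord_recl /= !Qp0 subrr add0r.
rewrite mulr_sumr scaler_sumr; apply: eq_bigr => i _.
rewrite -scalerBr QpD -scalerAr !scalerA; congr (_ *: _).
rewrite mulrN mulNr; congr (- _); rewrite mulrCA CgS // ?mulrA //.
  exact: hq (ltn_ord i).
exact: hc (ltn_ord i).
Qed.

Lemma Fg_one (K : fieldType) (q : K) n b c : Fg q n 1 b c = 1.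
Proof.
rewrite /Fg big_ord_recl /= !qp0 expr0 !mulr1 invr1 mulr1 big1 ?addr0 // => i _.
have -> : bump 0 i = i.+1 by [].
by rewrite (qpSl 1) subrr !(mulr0, mul0r).
Qed.

Lemma parity (K : fieldType) (q : K) n : q != 0 -> forall b c, c * q ^+ n = b * q ->
  (forall k, (k <= n)%N -> qpoch q q k != 0) ->
  (forall k, (k <= n)%N -> qpoch c (q ^+ 2) k != 0) ->
  forall s, Pp q n b c s = (-1) ^+ n *: Pp q n b c (- s).
Proof.
move=> q0; elim: n => [|n IH] b c hbc hq hc.
  by move=> s; rewrite /Pp !big_ord1 !Qp0 expr0 scale1r.
have hq' : forall k, (k <= n)%N -> qpoch q q k != 0.
  by move=> k hk; apply: hq; exact: leqW.
have hc' : forall k, (k <= n)%N -> qpoch (c * q ^+ 2) (q ^+ 2) k != 0.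
  by move=> k hk; have := hc k.+1 hk; rewrite qpSl mulf_eq0 negb_or => /andP[_ ->].
have hbc' : c * q ^+ 2 * q ^+ n = b * q * q.
  by rewrite -mulrA -exprD add2n exprSr mulrA hbc.
have IH' := IH (b * q) (c * q ^+ 2) hbc' hq' hc'.
pose H s := Pp q n.+1 b c s - (-1) ^+ n.+1 *: Pp q n.+1 b c (- s).
have hD : forall t, H t = H (t * q).
  move=> t; apply/eqP; rewrite -subr_eq0; rewrite /H.
  have -> : forall A B C D : {poly K}, A - (-1) ^+ n.+1 *: B - (C - (-1) ^+ n.+1 *: D)
     = (A - C) - (-1) ^+ n.+1 *: (B - D).
    by move=> A B C D; rewrite -!mul_polyC; ring.
  rewrite -mulNr PpD // PpD // mulNr (IH' (t * q)) -!scalerAr !scalerA (mulNr t q) -scalerBl.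
  apply/eqP; rewrite -[X in _ = X](scale0r ('X * Pp q n (b * q) (c * q ^+ 2) (- (t * q)))).
  congr (_ *: _); rewrite (exprS (-1) n); ring.
have cH : forall s i, (H s)`_i = s ^+ i * (H 1)`_i.
  move=> s i; rewrite /H !coefB !coefZ (coefPp _ _ _ _ s) (coefPp _ _ _ _ (- s)).
  rewrite (coefPp _ _ _ _ (- 1)) (exprNn s i); ring.
have hz : forall i, (0 < i)%N -> (H 1)`_i = 0.
  move=> i hi; case: (leqP i n.+1) => hin.
    have e := cH q i; rewrite -(mul1r q) -hD in e.
    have : (1 - q ^+ i) * (H 1)`_i = 0.
      by rewrite mulrBl mul1r {1}e mul1r subrr.
    move/eqP; rewrite mulf_eq0 => /orP[|/eqP //].
    case: i hi hin {e} => [//|j] _ hj.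
    by rewrite exprS; move: (qp_nz_last (hq j.+1 hj)) => /negPf ->.
  by rewrite /H coefB coefZ !coefPp_big // mulr0 subr0.
have hb : b = c * q ^+ n.+1 / q by rewrite hbc mulfK.
have hA : Fg q n.+1 (-1) b c = (-1) ^+ n.+1 by rewrite hb; apply: anchor.
have h0 : (H 1)`_0 = 0.
  have eH : H 1 = ((H 1)`_0)%:P.
    apply/polyP => i; rewrite coefC; case: i => [//|i].
    by rewrite hz.
  have : (H 1).[1] = 0.
    rewrite /H hornerD hornerN hornerZ !Pp_horner mulr1 mulN1r Fg_one hA.
    by rewrite -exprMn mulrNN mulr1 expr1n subrr.
  by move=> h; rewrite eH hornerC in h.
move=> s; apply/eqP; rewrite -subr_eq0; apply/eqP; apply/polyP => i.
rewrite coef0 -/(H s) cH; case: i => [|i]; first by rewrite h0 mulr0.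
by rewrite hz ?mulr0.
Qed.

Unset Implicit Arguments.

Theorem lemma3p1 (K : fieldType) (n : nat) (x b q : K) :
  (0 < n)%N ->
  q != 0 ->
  (forall k : nat, (k <= n)%N -> qpoch q q k != 0) ->
  (forall k : nat, (k <= n)%N -> qpoch (b * q ^ (1 - n%:Z)) (q ^+ 2) k != 0) ->
  Fn n x b q = (-1) ^+ n * Fn n (- x) b q.
Proof.
move=> _ q0 hq hc.
have e : q ^ (1 - n%:Z) = q / q ^+ n by rewrite expfzDr // expr1z exprnN.
rewrite e mulrA in hc.
have hbc : b * q / q ^+ n * q ^+ n = b * q by rewrite divfK // expf_neq0.
rewrite !Fn_Fg // -(mul1r x) -Pp_horner (parity q0 hbc hq hc 1) hornerZ Pp_horner.
by rewrite mulN1r mul1r.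
Qed.
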